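(* Let $e, e_1, e_2$ be terms of $\mathrm{F}_H$ and $x$ a variable, and suppose $e_1 \longrightarrow e_2$. (1) If $e[e_1/x] \longrightarrow^* v_1$ for a value $v_1$, then $e[e_2/x] \longrightarrow^* v_2$ for some value $v_2$; moreover, if $v_1 = \mathsf{true}$ then $v_2 = \mathsf{true}$. (2) If $e[e_2/x] \longrightarrow^* v_2$ for a value $v_2$, then $e[e_1/x] \longrightarrow^* v_1$ for some value $v_1$; moreover, if $v_2 = \mathsf{true}$ then $v_1 = \mathsf{true}$.
   Context: Syntax of the calculus $\mathrm{F}_H$. Fix a set of base types $B$ containing $\mathsf{Bool}$; each base type $B$ has a set $\mathcal{K}_B$ of constants (with $\mathcal{K}_{\mathsf{Bool}}=\{\mathsf{true},\mathsf{false}\}$); $k$ ranges over constants. Fix primitive operations $\mathtt{op}$, each with a denotation $[\![\mathtt{op}]\!]$, a partial function from tuples of constants to constants. Types: $T ::= B \mid \alpha \mid x{:}T_1\to T_2 \mid \forall\alpha.T \mid \{x{:}T \mid e\}$. Values: $v ::= k \mid \lambda x{:}T.e \mid \Lambda\alpha.e \mid \langle T_1\Rightarrow T_2\rangle^{\ell}$ ($\ell$ ranges over blame labels). Terms: $e ::= v \mid x \mid \mathtt{op}(e_1,\dots,e_n) \mid e_1\,e_2 \mid e\,T \mid \langle\!\langle \{x{:}T_1\mid e_1\}, e_2\rangle\!\rangle^{\ell} \mid \langle \{x{:}T_1\mid e_1\}, e_2, v\rangle^{\ell} \mid \Uparrow\ell$. Variables are not values. Substitution $e[e'/x]$ is capture-avoiding;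 $\mathsf{let}\ y{:}T = e_1\ \mathsf{in}\ e_2$ abbreviates $(\lambda y{:}T.e_2)\,e_1$. Reduction $\rightsquigarrow$: $\mathtt{op}(k_1,\dots,k_n)\rightsquigarrow[\![\mathtt{op}]\!](k_1,\dots,k_n)$; $(\lambda x{:}T.e)\,v\rightsquigarrow e[v/x]$; $(\Lambda\alpha.e)\,T\rightsquigarrow e[T/\alpha]$; $\langle B\Rightarrow B\rangle^\ell v\rightsquigarrow v$; $\langle x{:}T_{11}\to T_{12}\Rightarrow x{:}T_{21}\to T_{22}\rangle^\ell v\rightsquigarrow \lambda x{:}T_{21}.\,\mathsf{let}\ y{:}T_{11}=\langle T_{21}\Rightarrow T_{11}\rangle^\ell x\ \mathsf{in}\ \langle T_{12}[y/x]\Rightarrow T_{22}\rangle^\ell (v\,y)$ with $y$ fresh; $\langle\forall\alpha.T_1\Rightarrow\forall\alpha.T_2\rangle^\ell v\rightsquigarrow\Lambda\alpha.\langle T_1\Rightarrow T_2\rangle^\ell(v\,\alpha)$; $\langle\{x{:}T_1\mid e_1\}\Rightarrow T_2\rangle^\ell v\rightsquigarrow\langle T_1\Rightarrow T_2\rangle^\ell v$; $\langle T_1\Rightarrow\{x{:}T_2\mid e_2\}\rangle^\ell v\rightsquigarrow\langle\!\langle\{x{:}T_2\mid e_2\},\langle T_1\Rightarrow T_2\rangle^\ell v\rangle\!\rangle^\ell$ provided $T_1$ is not a refinement type; $\langle\!\langle\{x{:}T\mid e\},v\rangle\!\rangle^\ell\rightsquigarrow\langle\{x{:}T\mid e\},e[v/x],v\rangle^\ell$;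 $\langle\{x{:}T\mid e\},\mathsf{true},v\rangle^\ell\rightsquigarrow v$; $\langle\{x{:}T\mid e\},\mathsf{false},v\rangle^\ell\rightsquigarrow\Uparrow\ell$. Evaluation contexts: $E ::= [\,] \mid \mathtt{op}(v_1,\dots,v_n,E,e_1,\dots,e_m) \mid E\,e \mid v\,E \mid E\,T \mid \langle\!\langle\{x{:}T\mid e\},E\rangle\!\rangle^\ell \mid \langle\{x{:}T\mid e\},E,v\rangle^\ell$. Evaluation $\longrightarrow$: $E[e_1]\longrightarrow E[e_2]$ whenever $e_1\rightsquigarrow e_2$; $E[\Uparrow\ell]\longrightarrow\Uparrow\ell$ whenever $E\neq[\,]$. $\longrightarrow^*$ is the reflexive–transitive closure of $\longrightarrow$. *)

(* Defs.v *)
(* Syntax and operational semantics of the calculus F_H.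
   Binders are represented with de Bruijn indices (two index spaces: term
   variables and type variables). *)
From Stdlib Require Import List Arith.
Import ListNotations.

Set Implicit Arguments.

Record signature := Signature {
  base : Type;
  Bool : base;
  const : Type;
  const_ty : const -> base;
  ctrue : const;
  cfalse : const;
  ctrue_ty : const_ty ctrue = Bool;
  cfalse_ty : const_ty cfalse = Bool;
  ctrue_neq_cfalse : ctrue <> cfalse;
  bool_consts : forall k, const_ty k = Bool -> k = ctrue \/ k = cfalse;
  label : Type;
  opname : Type;
  denote : opname -> list const -> option const
}.

Section FH.
Variable Sg : signature.

(* TArr T1 T2   = x:T1 -> T2       (binds term variable 0 in T2)
   TAll T       = forall a. T      (binds type variable 0 in T)
   TRef T e     = {x:T | e}        (binds term variable 0 in e)
   tAbs T e     = \x:T. e          (binds term variable 0 in e)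
   tTAbs e      = /\a. e           (binds type variable 0 in e)
   tCast T1 T2 l        = <T1 => T2>^l
   tWait T p e l        = <<{x:T | p}, e>>^l     (binds term var 0 in p)
   tActive T p e v l    = <{x:T | p}, e, v>^l    (binds term var 0 in p)
   tBlame l             = Uparrow l *)
Inductive ty : Type :=
| TBase : base Sg -> ty
| TVar : nat -> ty
| TArr : ty -> ty -> ty
| TAll : ty -> ty
| TRef : ty -> tm -> ty
with tm : Type :=
| tConst : const Sg -> tm
| tVar : nat -> tm
| tOp : opname Sg -> list tm -> tm
| tAbs : ty -> tm -> tm
| tTAbs : tm -> tm
| tCast : ty -> ty -> label Sg -> tm
| tApp : tm -> tm -> tm
| tTApp : tm -> ty -> tm
| tWait : ty -> tm -> tm -> label Sg -> tm
| tActive : ty -> tm -> tm -> tm -> label Sg -> tm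
| tBlame : label Sg -> tm.

Definition is_value (e : tm) : Prop :=
  match e with
  | tConst _ | tAbs _ _ | tTAbs _ | tCast _ _ _ => True
  | _ => False
  end.

(* Well-formedness w.r.t. the grammar: the third component of an active
   check <{x:T|e}, e2, v>^l must be a value. *)
Fixpoint wf_ty (T : ty) : Prop :=
  match T with
  | TBase _ | TVar _ => True
  | TArr T1 T2 => wf_ty T1 /\ wf_ty T2
  | TAll T => wf_ty T
  | TRef T e => wf_ty T /\ wf_tm e
  end
with wf_tm (e : tm) : Prop :=
  match e with
  | tConst _ | tVar _ | tBlame _ => True
  | tOp _ es => (fix wfl (l : list tm) : Prop :=
                   match l with nil => True | e :: l => wf_tm e /\ wfl l end) es
  | tAbs T e => wf_ty T /\ wf_tm e
  | tTAbs e => wf_tm e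
  | tCast T1 T2 _ => wf_ty T1 /\ wf_ty T2
  | tApp e1 e2 => wf_tm e1 /\ wf_tm e2
  | tTApp e T => wf_tm e /\ wf_ty T
  | tWait T p e _ => wf_ty T /\ wf_tm p /\ wf_tm e
  | tActive T p e v _ => wf_ty T /\ wf_tm p /\ wf_tm e /\ wf_tm v /\ is_value v
  end.

Definition upren (xi : nat -> nat) (n : nat) : nat :=
  match n with 0 => 0 | S n => S (xi n) end.

Fixpoint ren_ty (xi zeta : nat -> nat) (T : ty) : ty :=
  match T with
  | TBase b => TBase b
  | TVar a => TVar (zeta a)
  | TArr T1 T2 => TArr (ren_ty xi zeta T1) (ren_ty (upren xi) zeta T2)
  | TAll T => TAll (ren_ty xi (upren zeta) T)
  | TRef T e => TRef (ren_ty xi zeta T) (ren_tm (upren xi) zeta e)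
  end
with ren_tm (xi zeta : nat -> nat) (e : tm) : tm :=
  match e with
  | tConst k => tConst k
  | tVar x => tVar (xi x)
  | tOp o es => tOp o (map (ren_tm xi zeta) es)
  | tAbs T e => tAbs (ren_ty xi zeta T) (ren_tm (upren xi) zeta e)
  | tTAbs e => tTAbs (ren_tm xi (upren zeta) e)
  | tCast T1 T2 l => tCast (ren_ty xi zeta T1) (ren_ty xi zeta T2) l
  | tApp e1 e2 => tApp (ren_tm xi zeta e1) (ren_tm xi zeta e2)
  | tTApp e T => tTApp (ren_tm xi zeta e) (ren_ty xi zeta T)
  | tWait T p e l =>
      tWait (ren_ty xi zeta T) (ren_tm (upren xi) zeta p) (ren_tm xi zeta e) l
  | tActive T p e v l =>
      tActive (ren_ty xi zeta T) (ren_tm (upren xi) zeta p)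
              (ren_tm xi zeta e) (ren_tm xi zeta v) l
  | tBlame l => tBlame l
  end.

Definition up_tm_tm (sigma : nat -> tm) (n : nat) : tm :=
  match n with 0 => tVar 0 | S n => ren_tm S (fun a => a) (sigma n) end.
Definition up_tm_ty (tau : nat -> ty) (n : nat) : ty :=
  ren_ty S (fun a => a) (tau n).
Definition up_ty_tm (sigma : nat -> tm) (n : nat) : tm :=
  ren_tm (fun x => x) S (sigma n).
Definition up_ty_ty (tau : nat -> ty) (n : nat) : ty :=
  match n with 0 => TVar 0 | S n => ren_ty (fun x => x) S (tau n) end.

Fixpoint subst_ty (sigma : nat -> tm) (tau : nat -> ty) (T : ty) : ty :=
  match T with
  | TBase b => TBase b
  | TVar a => tau a
  | TArr T1 T2 =>
      TArr (subst_ty sigma tau T1) (subst_ty (up_tm_tm sigma) (up_tm_ty tau) T2)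
  | TAll T => TAll (subst_ty (up_ty_tm sigma) (up_ty_ty tau) T)
  | TRef T e =>
      TRef (subst_ty sigma tau T) (subst_tm (up_tm_tm sigma) (up_tm_ty tau) e)
  end
with subst_tm (sigma : nat -> tm) (tau : nat -> ty) (e : tm) : tm :=
  match e with
  | tConst k => tConst k
  | tVar x => sigma x
  | tOp o es => tOp o (map (subst_tm sigma tau) es)
  | tAbs T e =>
      tAbs (subst_ty sigma tau T) (subst_tm (up_tm_tm sigma) (up_tm_ty tau) e)
  | tTAbs e => tTAbs (subst_tm (up_ty_tm sigma) (up_ty_ty tau) e)
  | tCast T1 T2 l => tCast (subst_ty sigma tau T1) (subst_ty sigma tau T2) l
  | tApp e1 e2 => tApp (subst_tm sigma tau e1) (subst_tm sigma tau e2)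
  | tTApp e T => tTApp (subst_tm sigma tau e) (subst_ty sigma tau T)
  | tWait T p e l =>
      tWait (subst_ty sigma tau T) (subst_tm (up_tm_tm sigma) (up_tm_ty tau) p)
            (subst_tm sigma tau e) l
  | tActive T p e v l =>
      tActive (subst_ty sigma tau T) (subst_tm (up_tm_tm sigma) (up_tm_ty tau) p)
              (subst_tm sigma tau e) (subst_tm sigma tau v) l
  | tBlame l => tBlame l
  end.

Definition open_tm (v : tm) (e : tm) : tm :=
  subst_tm (fun n => match n with 0 => v | S n => tVar n end) TVar e.
Definition open_ty (T : ty) (e : tm) : tm :=
  subst_tm tVar (fun n => match n with 0 => T | S n => TVar n end) e.

(* e[u/x] for a (free) variable x: every occurrence of x in e is replaced by u,
   capture-avoidingly; all other variables are left unchanged. *)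
Definition subst_var (x : nat) (u : tm) (e : tm) : tm :=
  subst_tm (fun n => if Nat.eqb n x then u else tVar n) TVar e.

Definition is_refinement (T : ty) : Prop :=
  match T with TRef _ _ => True | _ => False end.

Definition sh_tm (e : tm) : tm := ren_tm S (fun a => a) e.
Definition sh_ty (T : ty) : ty := ren_ty S (fun a => a) T.

Definition let_in (T : ty) (e1 e2 : tm) : tm := tApp (tAbs T e2) e1.

Inductive red : tm -> tm -> Prop :=
| red_op : forall o ks k,
    denote Sg o ks = Some k ->
    red (tOp o (map tConst ks)) (tConst k)
| red_beta : forall T e v,
    is_value v -> red (tApp (tAbs T e) v) (open_tm v e)
| red_tbeta : forall e T,
    red (tTApp (tTAbs e) T) (open_ty T e)
| red_cast_base : forall B l v,
    is_value v -> red (tApp (tCast (TBase B) (TBase B) l) v) v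
| red_cast_fun : forall T11 T12 T21 T22 l v,
    is_value v ->
    red (tApp (tCast (TArr T11 T12) (TArr T21 T22) l) v)
        (* \x:T21. let y:T11 = <T21 => T11>^l x in <T12[y/x] => T22>^l (v y) *)
        (tAbs T21
           (let_in (sh_ty T11)
              (tApp (tCast (sh_ty T21) (sh_ty T11) l) (tVar 0))
              (tApp (tCast (ren_ty (upren S) (fun a => a) T12)
                           (ren_ty S (fun a => a) T22) l)
                    (tApp (sh_tm (sh_tm v)) (tVar 0)))))
| red_cast_forall : forall T1 T2 l v,
    is_value v ->
    red (tApp (tCast (TAll T1) (TAll T2) l) v)
        (tTAbs (tApp (tCast T1 T2 l) (tTApp (ren_tm (fun x => x) S v) (TVar 0))))
| red_cast_forget : forall T1 e1 T2 l v,
    is_value v ->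
    red (tApp (tCast (TRef T1 e1) T2 l) v) (tApp (tCast T1 T2 l) v)
| red_cast_precheck : forall T1 T2 e2 l v,
    is_value v -> ~ is_refinement T1 ->
    red (tApp (tCast T1 (TRef T2 e2) l) v)
        (tWait T2 e2 (tApp (tCast T1 T2 l) v) l)
| red_check : forall T e v l,
    is_value v -> red (tWait T e v l) (tActive T e (open_tm v e) v l)
| red_ok : forall T e v l,
    is_value v -> red (tActive T e (tConst (ctrue Sg)) v l) v
| red_fail : forall T e v l,
    is_value v -> red (tActive T e (tConst (cfalse Sg)) v l) (tBlame l).

Inductive ectx : Type :=
| EHole : ectx
| EOp : opname Sg -> list tm -> ectx -> list tm -> ectx
| EAppL : ectx -> tm -> ectx
| EAppR : tm -> ectx -> ectx
| ETApp : ectx -> ty -> ectx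
| EWait : ty -> tm -> ectx -> label Sg -> ectx
| EActive : ty -> tm -> ectx -> tm -> label Sg -> ectx.

Fixpoint ectx_ok (E : ectx) : Prop :=
  match E with
  | EHole => True
  | EOp _ vs E _ => Forall is_value vs /\ ectx_ok E
  | EAppL E _ => ectx_ok E
  | EAppR v E => is_value v /\ ectx_ok E
  | ETApp E _ => ectx_ok E
  | EWait _ _ E _ => ectx_ok E
  | EActive _ _ E v _ => is_value v /\ ectx_ok E
  end.

Fixpoint plug (E : ectx) (e : tm) : tm :=
  match E with
  | EHole => e
  | EOp o vs E es => tOp o (vs ++ plug E e :: es)
  | EAppL E e2 => tApp (plug E e) e2
  | EAppR v E => tApp v (plug E e)
  | ETApp E T => tTApp (plug E e) T
  | EWait T p E l => tWait T p (plug E e) l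
  | EActive T p E v l => tActive T p (plug E e) v l
  end.

Inductive step : tm -> tm -> Prop :=
| step_red : forall E e1 e2,
    ectx_ok E -> red e1 e2 -> step (plug E e1) (plug E e2)
| step_blame : forall E l,
    ectx_ok E -> E <> EHole -> step (plug E (tBlame l)) (tBlame l).

Inductive steps : tm -> tm -> Prop :=
| steps_refl : forall e, steps e e
| steps_step : forall e1 e2 e3, step e1 e2 -> steps e2 e3 -> steps e1 e3.

End FH.

Arguments tConst {Sg} _.
Arguments tBlame {Sg} _.
Arguments TBase {Sg} _.

(* Main.v *)
Require Import Defs.
From Stdlib Require Import List Arith Lia.
Import ListNotations.
Set Implicit Arguments.

Arguments tVar {Sg} _.
Arguments TVar {Sg} _.
Arguments EHole {Sg}.

Section FHP.
Variable Sg : signature.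
Local Notation tm := (tm Sg).
Local Notation ty := (ty Sg).

Section Ind.
Variables (P : ty -> Prop) (Q : tm -> Prop).
Hypotheses
  (HBase : forall b, P (TBase b))
  (HTVar : forall n, P (TVar n))
  (HArr : forall T1 T2, P T1 -> P T2 -> P (TArr T1 T2))
  (HAll : forall T, P T -> P (TAll T))
  (HRef : forall T e, P T -> Q e -> P (TRef T e))
  (HConst : forall k, Q (tConst k))
  (HVar : forall n, Q (tVar n))
  (HOp : forall o es, Forall Q es -> Q (tOp o es))
  (HAbs : forall T e, P T -> Q e -> Q (tAbs T e))
  (HTAbs : forall e, Q e -> Q (tTAbs e))
  (HCast : forall T1 T2 l, P T1 -> P T2 -> Q (tCast T1 T2 l))
  (HApp : forall e1 e2, Q e1 -> Q e2 -> Q (tApp e1 e2))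
  (HTApp : forall e T, Q e -> P T -> Q (tTApp e T))
  (HWait : forall T p e l, P T -> Q p -> Q e -> Q (tWait T p e l))
  (HActive : forall T p e v l, P T -> Q p -> Q e -> Q v -> Q (tActive T p e v l))
  (HBlame : forall l, Q (tBlame l)).
Fixpoint ty_ind' (T : ty) : P T :=
  match T with
  | TBase b => HBase b
  | TVar n => HTVar n
  | TArr T1 T2 => HArr (ty_ind' T1) (ty_ind' T2)
  | TAll T => HAll (ty_ind' T)
  | TRef T e => HRef (ty_ind' T) (tm_ind' e)
  end
with tm_ind' (e : tm) : Q e :=
  match e with
  | tConst k => HConst k
  | tVar n => HVar n
  | tOp o es => HOp o ((fix go (l : list tm) : Forall Q l :=
                          match l with nil => Forall_nil _
                          | e :: l => Forall_cons _ (tm_ind' e) (go l) end) es)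
  | tAbs T e => HAbs (ty_ind' T) (tm_ind' e)
  | tTAbs e => HTAbs (tm_ind' e)
  | tCast T1 T2 l => HCast l (ty_ind' T1) (ty_ind' T2)
  | tApp e1 e2 => HApp (tm_ind' e1) (tm_ind' e2)
  | tTApp e T => HTApp (tm_ind' e) (ty_ind' T)
  | tWait T p e l => HWait l (ty_ind' T) (tm_ind' p) (tm_ind' e)
  | tActive T p e v l => HActive l (ty_ind' T) (tm_ind' p) (tm_ind' e) (tm_ind' v)
  | tBlame l => HBlame l
  end.
Lemma syn_ind : (forall T, P T) /\ (forall e, Q e).
Proof. split; [exact ty_ind' | exact tm_ind']. Qed.
End Ind.

Lemma map_ext_F (A B : Type) (f g : A -> B) l :
  Forall (fun x => f x = g x) l -> map f l = map g l.
Proof. induction 1; simpl; f_equal; auto. Qed.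

Lemma map_ext_F2 (A B : Type) (P : A -> Prop) (f g : A -> B) l :
  Forall P l -> (forall x, P x -> f x = g x) -> map f l = map g l.
Proof. induction 1; simpl; intros; f_equal; auto. Qed.

Ltac syn_tac :=
  simpl; intros; f_equal; eauto;
  try match goal with H : Forall _ ?l |- map _ ?l = map _ ?l =>
    apply map_ext_F2 with (1 := H); intros; eauto end.

Lemma upren_ext xi xi' : (forall n, xi n = xi' n) -> forall n, upren xi n = upren xi' n.
Proof. intros H [|n]; simpl; auto. Qed.
Hint Resolve upren_ext : core.

Lemma ren_ext :
  (forall (T : ty) xi xi' z z', (forall n, xi n = xi' n) -> (forall n, z n = z' n) ->
     ren_ty xi z T = ren_ty xi' z' T) /\
  (forall (e : tm) xi xi' z z', (forall n, xi n = xi' n) -> (forall n, z n = z' n) ->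
     ren_tm xi z e = ren_tm xi' z' e).
Proof.
  apply syn_ind; syn_tac.
Qed.

Ltac upext := intros [|?]; unfold up_tm_tm, up_tm_ty, up_ty_tm, up_ty_ty; simpl; try congruence.

Lemma subst_ext :
  (forall (T : ty) s s' t t', (forall n, s n = s' n) -> (forall n, t n = t' n) ->
     subst_ty s t T = subst_ty s' t' T) /\
  (forall (e : tm) s s' t t', (forall n, s n = s' n) -> (forall n, t n = t' n) ->
     subst_tm s t e = subst_tm s' t' e).
Proof.
  apply syn_ind; syn_tac;
  match goal with H : forall (s s' : nat -> tm) (t t' : nat -> ty), _ |- _ => apply H end; upext.
Qed.

Lemma ren_ren :
  (forall (T : ty) xi z xi' z', ren_ty xi z (ren_ty xi' z' T) = ren_ty (fun n => xi (xi' n)) (fun n => z (z' n)) T) /\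
  (forall (e : tm) xi z xi' z', ren_tm xi z (ren_tm xi' z' e) = ren_tm (fun n => xi (xi' n)) (fun n => z (z' n)) e).
Proof.
  apply syn_ind; syn_tac;
  try (rewrite map_map; apply map_ext_F2 with (1 := H); intros; eauto);
  match goal with H : forall (xi z xi' z' : nat -> nat), _ |- _ => rewrite H end;
  first [apply (proj1 ren_ext) | apply (proj2 ren_ext)]; intros [|?]; reflexivity.
Qed.

Definition ren_ren_ty := proj1 ren_ren.
Definition ren_ren_tm := proj2 ren_ren.

Ltac ptw := intros [|?]; unfold up_tm_tm, up_tm_ty, up_ty_tm, up_ty_ty; simpl;
  rewrite ?ren_ren_ty, ?ren_ren_tm; try reflexivity;
  first [apply (proj1 ren_ext) | apply (proj2 ren_ext)]; intros [|?]; reflexivity.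

Ltac bindtac :=
  match goal with H : forall (a : nat -> _) (b : nat -> _) (c : nat -> _) (d : nat -> _), _ |- _ => rewrite H end;
  first [apply (proj1 subst_ext) | apply (proj2 subst_ext)]; ptw.

Lemma subst_ren :
  (forall (T : ty) s t xi z, subst_ty s t (ren_ty xi z T) = subst_ty (fun n => s (xi n)) (fun n => t (z n)) T) /\
  (forall (e : tm) s t xi z, subst_tm s t (ren_tm xi z e) = subst_tm (fun n => s (xi n)) (fun n => t (z n)) e).
Proof.
  apply syn_ind; syn_tac;
  try (rewrite map_map; apply map_ext_F2 with (1 := H); intros; eauto);
  bindtac.
Qed.
Definition subst_ren_ty := proj1 subst_ren.
Definition subst_ren_tm := proj2 subst_ren.

Lemma ren_subst :
  (forall (T : ty) s t xi z, ren_ty xi z (subst_ty s t T) = subst_ty (fun n => ren_tm xi z (s n)) (fun n => ren_ty xi z (t n)) T) /\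
  (forall (e : tm) s t xi z, ren_tm xi z (subst_tm s t e) = subst_tm (fun n => ren_tm xi z (s n)) (fun n => ren_ty xi z (t n)) e).
Proof.
  apply syn_ind; syn_tac;
  try (rewrite map_map; apply map_ext_F2 with (1 := H); intros; eauto);
  bindtac.
Qed.
Definition ren_subst_ty := proj1 ren_subst.
Definition ren_subst_tm := proj2 ren_subst.

Ltac ptw2 := intros [|?]; unfold up_tm_tm, up_tm_ty, up_ty_tm, up_ty_ty; simpl;
  rewrite ?ren_subst_ty, ?ren_subst_tm, ?subst_ren_ty, ?subst_ren_tm; try reflexivity;
  first [apply (proj1 subst_ext) | apply (proj2 subst_ext)]; intros [|?]; reflexivity.

Lemma subst_subst :
  (forall (T : ty) s t s' t', subst_ty s t (subst_ty s' t' T) = subst_ty (fun n => subst_tm s t (s' n)) (fun n => subst_ty s t (t' n)) T) /\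
  (forall (e : tm) s t s' t', subst_tm s t (subst_tm s' t' e) = subst_tm (fun n => subst_tm s t (s' n)) (fun n => subst_ty s t (t' n)) e).
Proof.
  apply syn_ind; syn_tac;
  try (rewrite map_map; apply map_ext_F2 with (1 := H); intros; eauto);
  match goal with H : forall (a : nat -> _) (b : nat -> _) (c : nat -> _) (d : nat -> _), _ |- _ => rewrite H end;
  first [apply (proj1 subst_ext) | apply (proj2 subst_ext)]; ptw2.
Qed.
Definition subst_subst_ty := proj1 subst_subst.
Definition subst_subst_tm := proj2 subst_subst.

Lemma subst_id :
  (forall (T : ty), subst_ty tVar TVar T = T) /\ (forall (e : tm), subst_tm tVar TVar e = e).
Proof.
  apply syn_ind; syn_tac;
  try (rewrite <- map_id; apply map_ext_F2 with (1 := H); intros; eauto);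
  (etransitivity; [|eassumption]);
  first [apply (proj1 subst_ext) | apply (proj2 subst_ext)]; intros [|?]; reflexivity.
Qed.

Lemma ren_as_subst :
  (forall (T : ty) xi z, ren_ty xi z T = subst_ty (fun n => tVar (xi n)) (fun n => TVar (z n)) T) /\
  (forall (e : tm) xi z, ren_tm xi z e = subst_tm (fun n => tVar (xi n)) (fun n => TVar (z n)) e).
Proof.
  apply syn_ind; syn_tac;
  try (apply map_ext_F2 with (1 := H); intros; eauto);
  match goal with H : forall (a : nat -> _) (b : nat -> _), _ |- _ => rewrite H end;
  first [apply (proj1 subst_ext) | apply (proj2 subst_ext)]; intros [|?]; reflexivity.
Qed.

Lemma subst_id' :
  (forall (T : ty) s t, (forall n, s n = tVar n) -> (forall n, t n = TVar n) -> subst_ty s t T = T) /\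
  (forall (e : tm) s t, (forall n, s n = tVar n) -> (forall n, t n = TVar n) -> subst_tm s t e = e).
Proof.
  split; intros.
  - rewrite <- (proj1 subst_id T) at 2; apply (proj1 subst_ext); auto.
  - rewrite <- (proj2 subst_id e) at 2; apply (proj2 subst_ext); auto.
Qed.

Lemma open_subst (s : nat -> tm) t v e :
  subst_tm s t (open_tm v e) = open_tm (subst_tm s t v) (subst_tm (up_tm_tm s) (up_tm_ty t) e).
Proof.
  unfold open_tm; rewrite !subst_subst_tm; apply (proj2 subst_ext).
  - intros [|n]; simpl; auto. unfold up_tm_tm. rewrite subst_ren_tm.
    symmetry; apply (proj2 subst_id'); intros; reflexivity.
  - intros n; simpl. unfold up_tm_ty. rewrite subst_ren_ty.
    symmetry; apply (proj1 subst_id'); intros; reflexivity.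
Qed.

Lemma open_ty_subst (s : nat -> tm) t T e :
  subst_tm s t (open_ty T e) = open_ty (subst_ty s t T) (subst_tm (up_ty_tm s) (up_ty_ty t) e).
Proof.
  unfold open_ty; rewrite !subst_subst_tm; apply (proj2 subst_ext).
  - intros n; simpl. unfold up_ty_tm. rewrite subst_ren_tm.
    symmetry; apply (proj2 subst_id'); intros; reflexivity.
  - intros [|n]; simpl; auto. unfold up_ty_ty. rewrite subst_ren_ty.
    symmetry; apply (proj1 subst_id'); intros; reflexivity.
Qed.

Definition is_value_b (e : tm) : bool :=
  match e with
  | tConst _ | tAbs _ _ | tTAbs _ | tCast _ _ _ => true
  | _ => false
  end.

Lemma value_subst s t (v : tm) : is_value v -> is_value (subst_tm s t v).
Proof. destruct v; simpl; tauto. Qed.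

Lemma value_ren xi z (v : tm) : is_value v -> is_value (ren_tm xi z v).
Proof. destruct v; simpl; tauto. Qed.

Definition tvarval (t : nat -> ty) := forall n, exists m, t n = TVar m.

Lemma refinement_subst s t (T : ty) : tvarval t -> ~ is_refinement T -> ~ is_refinement (subst_ty s t T).
Proof. intros Ht; destruct T; simpl; try tauto. destruct (Ht n) as [m ->]; simpl; tauto. Qed.

Ltac eqtac :=
  try reflexivity;
  rewrite ?ren_subst_ty, ?ren_subst_tm, ?subst_ren_ty, ?subst_ren_tm;
  first [apply (proj1 subst_ext) | apply (proj2 subst_ext)]; ptw.

Lemma red_cast_fun' : forall T11 T12 T21 T22 l (v : tm) R,
    is_value v ->
    R = (tAbs T21
           (let_in (sh_ty T11)
              (tApp (tCast (sh_ty T21) (sh_ty T11) l) (tVar 0))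
              (tApp (tCast (ren_ty (upren S) (fun a => a) T12)
                           (ren_ty S (fun a => a) T22) l)
                    (tApp (sh_tm (sh_tm v)) (tVar 0))))) ->
    red (tApp (tCast (TArr T11 T12) (TArr T21 T22) l) v) R.
Proof. intros; subst; constructor; auto. Qed.

Lemma red_cast_forall' : forall T1 T2 l (v : tm) R,
    is_value v ->
    R = (tTAbs (tApp (tCast T1 T2 l) (tTApp (ren_tm (fun x => x) S v) (TVar 0)))) ->
    red (tApp (tCast (TAll T1) (TAll T2) l) v) R.
Proof. intros; subst; constructor; auto. Qed.

Lemma red_subst s t (a b : tm) : tvarval t -> red a b -> red (subst_tm s t a) (subst_tm s t b).
Proof.
  intros Ht; destruct 1; simpl.
  - rewrite map_map; simpl. rewrite <- map_map with (g := fun x => x) (f := tConst) in *.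
    rewrite map_id. constructor; auto.
  - rewrite open_subst. constructor. apply value_subst; auto.
  - rewrite open_ty_subst. constructor.
  - constructor. apply value_subst; auto.
  - eapply red_cast_fun'. apply value_subst; auto.
    unfold let_in, sh_ty, sh_tm. simpl. repeat f_equal; eqtac.
  - eapply red_cast_forall'. apply value_subst; auto.
    simpl. repeat f_equal; eqtac.
  - constructor. apply value_subst; auto.
  - constructor. apply value_subst; auto. apply refinement_subst; auto.
  - rewrite open_subst. constructor. apply value_subst; auto.
  - constructor. apply value_subst; auto.
  - constructor. apply value_subst; auto.
Qed.

Inductive frame : Type :=
| FOp : opname Sg -> list tm -> list tm -> frame
| FAppL : tm -> frame
| FAppR : tm -> frame
| FTApp : ty -> frame
| FWait : ty -> tm -> label Sg -> frame
| FActive : ty -> tm -> tm -> label Sg -> frame.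

Definition fplug (F : frame) (a : tm) : tm :=
  match F with
  | FOp o vs es => tOp o (vs ++ a :: es)
  | FAppL e => tApp a e
  | FAppR v => tApp v a
  | FTApp T => tTApp a T
  | FWait T p l => tWait T p a l
  | FActive T p v l => tActive T p a v l
  end.

Definition fok (F : frame) : Prop :=
  match F with
  | FOp _ vs _ => Forall (@is_value Sg) vs
  | FAppR v => is_value v
  | FActive _ _ v _ => is_value v
  | _ => True
  end.

Definition fr_ectx (F : frame) (E : ectx Sg) : ectx Sg :=
  match F with
  | FOp o vs es => EOp o vs E es
  | FAppL e => EAppL E e
  | FAppR v => EAppR v E
  | FTApp T => ETApp E T
  | FWait T p l => EWait T p E l
  | FActive T p v l => EActive T p E v l
  end.

Lemma plug_fr F E e : plug (fr_ectx F E) e = fplug F (plug E e).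
Proof. destruct F; reflexivity. Qed.
Lemma ok_fr F E : fok F -> ectx_ok E -> ectx_ok (fr_ectx F E).
Proof. destruct F; simpl; tauto. Qed.

Inductive rst : tm -> tm -> Prop :=
| rs_red a b : red a b -> rst a b
| rs_fr F a b : fok F -> rst a b -> rst (fplug F a) (fplug F b).
Inductive blm : tm -> label Sg -> Prop :=
| bl_here l : blm (tBlame l) l
| bl_fr F a l : fok F -> blm a l -> blm (fplug F a) l.
Inductive st : tm -> tm -> Prop :=
| st_r a b : rst a b -> st a b
| st_b F a l : fok F -> blm a l -> st (fplug F a) (tBlame l).
Inductive sts : tm -> tm -> Prop :=
| sts_refl a : sts a a
| sts_step a b c : st a b -> sts b c -> sts a c.

Lemma sts_trans a b c : sts a b -> sts b c -> sts a c.
Proof. induction 1; intros; auto. econstructor; eauto. Qed.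
Lemma sts_one a b : st a b -> sts a b.
Proof. intros; econstructor; eauto; constructor. Qed.

Lemma red_rst E (r r' : tm) : ectx_ok E -> red r r' -> rst (plug E r) (plug E r').
Proof.
  induction E; simpl; intros.
  - constructor; auto.
  - apply (rs_fr (FOp o l l0)); simpl; tauto.
  - apply (rs_fr (FAppL t)); simpl; tauto.
  - apply (rs_fr (FAppR t)); simpl; tauto.
  - apply (rs_fr (FTApp t)); simpl; tauto.
  - apply (rs_fr (FWait t t0 l)); simpl; tauto.
  - apply (rs_fr (FActive t t0 t1 l)); simpl; tauto.
Qed.

Lemma blm_plug E l : ectx_ok E -> blm (plug E (tBlame l)) l.
Proof.
  induction E; simpl; intros.
  - constructor.
  - apply (bl_fr (FOp o l0 l1)); simpl; tauto.
  - apply (bl_fr (FAppL t)); simpl; tauto.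
  - apply (bl_fr (FAppR t)); simpl; tauto.
  - apply (bl_fr (FTApp t)); simpl; tauto.
  - apply (bl_fr (FWait t t0 l0)); simpl; tauto.
  - apply (bl_fr (FActive t t0 t1 l0)); simpl; tauto.
Qed.

Lemma step_st a b : step a b -> st a b.
Proof.
  destruct 1.
  - constructor. apply red_rst; auto.
  - destruct E; simpl in *; try congruence.
    + apply (st_b (FOp o l0 l1)); simpl; try tauto; apply blm_plug; tauto.
    + apply (st_b (FAppL t)); simpl; try tauto; apply blm_plug; tauto.
    + apply (st_b (FAppR t)); simpl; try tauto; apply blm_plug; tauto.
    + apply (st_b (FTApp t)); simpl; try tauto; apply blm_plug; tauto.
    + apply (st_b (FWait t t0 l0)); simpl; try tauto; apply blm_plug; tauto.
    + apply (st_b (FActive t t0 t1 l0)); simpl; try tauto; apply blm_plug; tauto.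
Qed.

Lemma rst_ex a b : rst a b -> exists E r r', ectx_ok E /\ red r r' /\ a = plug E r /\ b = plug E r'.
Proof.
  induction 1.
  - exists EHole, a, b; simpl; auto.
  - destruct IHrst as (E & r & r' & H1 & H2 & -> & ->).
    exists (fr_ectx F E), r, r'; rewrite !plug_fr; auto using ok_fr.
Qed.

Lemma blm_ex a l : blm a l -> exists E, ectx_ok E /\ a = plug E (tBlame l).
Proof.
  induction 1.
  - exists EHole; simpl; auto.
  - destruct IHblm as (E & H1 & ->). exists (fr_ectx F E); rewrite plug_fr; auto using ok_fr.
Qed.

Lemma st_step a b : st a b -> step a b.
Proof.
  destruct 1.
  - destruct (rst_ex H) as (E & r & r' & H1 & H2 & -> & ->). constructor; auto.
  - destruct (blm_ex H0) as (E & H1 & ->). rewrite <- plug_fr. constructor.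
    + apply ok_fr; auto.
    + destruct F; discriminate.
Qed.

Lemma steps_sts a b : steps a b <-> sts a b.
Proof.
  split; induction 1; econstructor; eauto using step_st, st_step.
Qed.

Lemma fplug_nval F (a : tm) : ~ is_value (fplug F a).
Proof. destruct F; simpl; tauto. Qed.
Lemma fplug_nblame F (a : tm) l : fplug F a <> tBlame l.
Proof. destruct F; discriminate. Qed.

Lemma red_nval (a b : tm) : red a b -> ~ is_value a.
Proof. destruct 1; simpl; tauto. Qed.
Lemma rst_nval (a b : tm) : rst a b -> ~ is_value a.
Proof. destruct 1; [eapply red_nval; eauto | apply fplug_nval]. Qed.
Lemma blm_nval (a : tm) l : blm a l -> ~ is_value a.
Proof. destruct 1; [simpl; tauto | apply fplug_nval]. Qed.
Lemma st_nval (a b : tm) : st a b -> ~ is_value a.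
Proof. destruct 1; [eapply rst_nval; eauto | apply fplug_nval]. Qed.
Lemma st_nblame (b : tm) l : ~ st (tBlame l) b.
Proof.
  intro H; inversion H; subst.
  - inversion H0; subst. inversion H1. eapply fplug_nblame; eauto.
  - eapply fplug_nblame; eauto.
Qed.

Lemma in_map_const (ks : list (const Sg)) (a : tm) : In a (map tConst ks) -> is_value a.
Proof. rewrite in_map_iff. intros (k & <- & _). simpl; auto. Qed.

Lemma red_fplug F (a b : tm) : red (fplug F a) b -> is_value a.
Proof.
  intros H; destruct F; simpl in H; inversion H; subst; simpl; auto.
  apply in_map_const with ks. match goal with E : map _ _ = _ |- _ => rewrite E end.
  apply in_or_app; simpl; auto.
Qed.

Lemma app_split (vs vs' es es' : list tm) (a a' : tm) :
  Forall (@is_value Sg) vs -> Forall (@is_value Sg) vs' -> ~ is_value a -> ~ is_value a' ->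
  vs ++ a :: es = vs' ++ a' :: es' -> vs = vs' /\ a = a' /\ es = es'.
Proof.
  intros H; revert vs'; induction H; intros vs' H' Ha Ha' E; destruct vs'; simpl in *;
    inversion E; subst; auto.
  - inversion H'; subst; tauto.
  - tauto.
  - inversion H'; subst. destruct (IHForall vs') as (-> & -> & ->); auto.
Qed.

Lemma fplug_inj F F' (a a' : tm) : fok F -> fok F' -> ~ is_value a -> ~ is_value a' ->
  fplug F a = fplug F' a' -> F = F' /\ a = a'.
Proof.
  intros HF HF' Ha Ha' E; destruct F, F'; simpl in *; inversion E; subst; try tauto.
  destruct (@app_split l l1 l0 l2 a a' HF HF' Ha Ha' H1) as (-> & -> & ->); auto.
Qed.

Lemma map_const_inj (ks ks' : list (const Sg)) : map tConst ks = map tConst ks' -> ks = ks'.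
Proof. revert ks'; induction ks; destruct ks'; simpl; intros; try discriminate; auto.
  inversion H; f_equal; auto. Qed.

Lemma red_det (a b c : tm) : red a b -> red a c -> b = c.
Proof.
  intros H1 H2; inversion H1; subst; inversion H2; subst; auto; try congruence;
  try (simpl in *; tauto).
  all: try (exfalso; apply (ctrue_neq_cfalse Sg); congruence).
  match goal with E : map _ ?x = map _ ?y |- _ => apply map_const_inj in E end.
  subst; congruence.
Qed.

Lemma rst_inv (x c : tm) : rst x c -> red x c \/ exists F a b, fok F /\ rst a b /\ x = fplug F a /\ c = fplug F b.
Proof. destruct 1; [left | right; exists F, a, b]; auto. Qed.
Lemma blm_inv (x : tm) l : blm x l -> x = tBlame l \/ exists F a, fok F /\ blm a l /\ x = fplug F a.
Proof. destruct 1; [left | right; exists F, a]; auto. Qed.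

Lemma rst_det (a b : tm) : rst a b -> forall c, rst a c -> b = c.
Proof.
  induction 1; intros c H'; destruct (rst_inv H') as [H2 | (F' & a' & b' & HF' & Hr & E1 & E2)].
  - eapply red_det; eauto.
  - subst. apply red_fplug in H. exfalso; exact (rst_nval Hr H).
  - apply red_fplug in H2. exfalso; exact (rst_nval H0 H2).
  - subst. destruct (fplug_inj _ _ _ _ H HF' (rst_nval H0) (rst_nval Hr) E1) as [-> ->].
    f_equal; auto.
Qed.

Lemma rst_blm (a b : tm) : rst a b -> forall l, blm a l -> False.
Proof.
  induction 1; intros l' H'; destruct (blm_inv H') as [E | (F' & a' & HF' & Hb & E)].
  - subst. inversion H.
  - subst. apply red_fplug in H. eapply blm_nval; eauto.
  - eapply fplug_nblame; eauto.
  - destruct (fplug_inj _ _ _ _ H HF' (rst_nval H0) (blm_nval Hb) E) as [-> ->]. eauto.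
Qed.

Lemma blm_det (a : tm) l : blm a l -> forall l', blm a l' -> l = l'.
Proof.
  induction 1; intros l' H'; destruct (blm_inv H') as [E | (F' & a' & HF' & Hb & E)].
  - congruence.
  - exfalso; eapply fplug_nblame; eauto.
  - exfalso; eapply fplug_nblame; eauto.
  - destruct (fplug_inj _ _ _ _ H HF' (blm_nval H0) (blm_nval Hb) E) as [-> ->]. eauto.
Qed.

Lemma st_inv (x c : tm) : st x c -> rst x c \/ exists F a l, fok F /\ blm a l /\ x = fplug F a /\ c = tBlame l.
Proof. destruct 1; [left | right; exists F, a, l]; auto. Qed.

Lemma st_det (a b c : tm) : st a b -> st a c -> b = c.
Proof.
  intros H1 H2; destruct (st_inv H1) as [R1 | (F & a1 & l1 & HF & Hb & E1 & E2)];
  destruct (st_inv H2) as [R2 | (F' & a2 & l2 & HF' & Hb' & E1' & E2')]; subst.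
  - eapply rst_det; eauto.
  - exfalso. apply (rst_blm R1 (l:=l2)). apply bl_fr; auto.
  - exfalso. apply (rst_blm R2 (l:=l1)). apply bl_fr; auto.
  - destruct (fplug_inj _ _ _ _ HF HF' (blm_nval Hb) (blm_nval Hb') E1') as [-> ->].
    f_equal; eapply blm_det; eauto.
Qed.

Definition normal (a : tm) := forall b, ~ st a b.

Lemma sts_det_normal (a b c : tm) : sts a b -> sts a c -> normal c -> sts b c.
Proof.
  intros H; revert c; induction H; intros c' H1 Hn; auto.
  inversion H1; subst.
  - exfalso; eapply Hn; eauto.
  - rewrite (st_det H H2) in *. auto.
Qed.

Lemma value_normal (v : tm) : is_value v -> normal v.
Proof. intros Hv b Hs. eapply st_nval; eauto. Qed.
Lemma blame_normal l : normal (tBlame l).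
Proof. intros b Hs. eapply st_nblame; eauto. Qed.

Lemma sts_normal (a b : tm) : sts a b -> normal a -> a = b.
Proof. destruct 1; auto. intros Hn; exfalso; eapply Hn; eauto. Qed.

Definition substF s t (F : frame) : frame :=
  match F with
  | FOp o vs es => FOp o (map (subst_tm s t) vs) (map (subst_tm s t) es)
  | FAppL e => FAppL (subst_tm s t e)
  | FAppR v => FAppR (subst_tm s t v)
  | FTApp T => FTApp (subst_ty s t T)
  | FWait T p l => FWait (subst_ty s t T) (subst_tm (up_tm_tm s) (up_tm_ty t) p) l
  | FActive T p v l => FActive (subst_ty s t T) (subst_tm (up_tm_tm s) (up_tm_ty t) p) (subst_tm s t v) l
  end.

Lemma fplug_subst s t F a : subst_tm s t (fplug F a) = fplug (substF s t F) (subst_tm s t a).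
Proof. destruct F; simpl; auto. rewrite map_app; reflexivity. Qed.

Lemma fok_subst s t F : fok F -> fok (substF s t F).
Proof.
  destruct F; simpl; auto using value_subst.
  induction 1; simpl; constructor; auto using value_subst.
Qed.

Lemma rst_subst s t (a b : tm) : tvarval t -> rst a b -> rst (subst_tm s t a) (subst_tm s t b).
Proof.
  intros Ht; induction 1.
  - constructor; apply red_subst; auto.
  - rewrite !fplug_subst; apply rs_fr; auto using fok_subst.
Qed.

Lemma blm_subst s t (a : tm) l : blm a l -> blm (subst_tm s t a) l.
Proof.
  induction 1; simpl.
  - constructor.
  - rewrite fplug_subst; apply bl_fr; auto using fok_subst.
Qed.

Lemma st_subst s t (a b : tm) : tvarval t -> st a b -> st (subst_tm s t a) (subst_tm s t b).
Proof.
  intros Ht; destruct 1.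
  - constructor; apply rst_subst; auto.
  - rewrite fplug_subst; simpl; apply st_b; auto using fok_subst, blm_subst.
Qed.

Lemma sts_subst s t (a b : tm) : tvarval t -> sts a b -> sts (subst_tm s t a) (subst_tm s t b).
Proof. intros Ht; induction 1; econstructor; eauto using st_subst. Qed.

Definition stab (k : nat) (R : tm -> tm -> Prop) (a b : tm) : Prop :=
  forall s t, (forall n, k <= n -> exists m, t n = TVar m) -> R (subst_tm s t a) (subst_tm s t b).

Lemma st_stab0 (a b : tm) : st a b -> stab 0 st a b.
Proof. intros H s t Ht; apply st_subst; auto. intros n; apply Ht; lia. Qed.
Lemma sts_stab0 (a b : tm) : sts a b -> stab 0 sts a b.
Proof. intros H s t Ht; apply sts_subst; auto. intros n; apply Ht; lia. Qed.

Lemma stab_id k R (a b : tm) : stab k R a b -> R a b.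
Proof.
  intros H. specialize (H tVar TVar (fun n _ => ex_intro _ n eq_refl)).
  rewrite !(proj2 subst_id) in H; auto.
Qed.

Lemma stab_subst k j R (a b : tm) s t :
  (forall n, k <= n -> exists m, j <= m /\ t n = TVar m) ->
  stab k R a b -> stab j R (subst_tm s t a) (subst_tm s t b).
Proof.
  intros Ht H s2 u Hu. rewrite !subst_subst_tm. apply H.
  intros n Hn. destruct (Ht n Hn) as (m & Hm & ->). simpl. apply Hu; auto.
Qed.

Lemma stab_ren k j R (a b : tm) xi z :
  (forall n, k <= n -> j <= z n) ->
  stab k R a b -> stab j R (ren_tm xi z a) (ren_tm xi z b).
Proof.
  intros Hz H. rewrite !(proj2 ren_as_subst). apply stab_subst with k; auto.
  intros n Hn; exists (z n); auto.
Qed.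

Lemma stab_sts_blame k (b : tm) l : stab k sts (tBlame l) b -> True.
Proof. auto. Qed.

Inductive prT : nat -> ty -> ty -> Prop :=
| pT_base k b : prT k (TBase b) (TBase b)
| pT_var k n : prT k (TVar n) (TVar n)
| pT_arr k T1 T2 T1' T2' : prT k T1 T1' -> prT k T2 T2' -> prT k (TArr T1 T2) (TArr T1' T2')
| pT_all k T T' : prT (S k) T T' -> prT k (TAll T) (TAll T')
| pT_ref k T e T' e' : prT k T T' -> pr k e e' -> prT k (TRef T e) (TRef T' e')
with pr : nat -> tm -> tm -> Prop :=
| p_st k a a' b : stab k st a a' -> pr k a' b -> pr k a b
| p_blame k l b : stab k sts b (tBlame l) -> pr k (tBlame l) b
| p_const k c : pr k (tConst c) (tConst c)
| p_var k n : pr k (tVar n) (tVar n)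
| p_op k o l l' : prL k l l' -> pr k (tOp o l) (tOp o l')
| p_abs k T e T' e' : prT k T T' -> pr k e e' -> pr k (tAbs T e) (tAbs T' e')
| p_tabs k e e' : pr (S k) e e' -> pr k (tTAbs e) (tTAbs e')
| p_cast k T1 T2 T1' T2' l : prT k T1 T1' -> prT k T2 T2' -> pr k (tCast T1 T2 l) (tCast T1' T2' l)
| p_app k a b a' b' : pr k a a' -> pr k b b' -> pr k (tApp a b) (tApp a' b')
| p_tapp k a T a' T' : pr k a a' -> prT k T T' -> pr k (tTApp a T) (tTApp a' T')
| p_wait k T p e l T' p' e' : prT k T T' -> pr k p p' -> pr k e e' -> pr k (tWait T p e l) (tWait T' p' e' l)
| p_active k T p e v l T' p' e' v' : prT k T T' -> pr k p p' -> pr k e e' -> pr k v v' -> is_value v ->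
    pr k (tActive T p e v l) (tActive T' p' e' v' l)
with prL : nat -> list tm -> list tm -> Prop :=
| pL_nil k : prL k nil nil
| pL_cons k a a' l l' : pr k a a' -> prL k l l' -> prL k (a :: l) (a' :: l').

Scheme prT_ind2 := Induction for prT Sort Prop
with pr_ind2 := Induction for pr Sort Prop
with prL_ind2 := Induction for prL Sort Prop.
Combined Scheme pr_mut from prT_ind2, pr_ind2, prL_ind2.

Lemma pr_refl :
  (forall (T : ty), wf_ty T -> forall k, prT k T T) /\ (forall (e : tm), wf_tm e -> forall k, pr k e e).
Proof.
  apply syn_ind; simpl; intros; try solve [constructor; intuition eauto].
  all: try (apply p_blame; intros s t _; simpl; constructor).
  constructor. induction H; simpl in *; constructor; intuition.
Qed.

Lemma pr_ren :
  (forall k (T T' : ty), prT k T T' -> forall j xi z, (forall n, k <= n -> j <= z n) -> prT j (ren_ty xi z T) (ren_ty xi z T')) /\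
  (forall k (a b : tm), pr k a b -> forall j xi z, (forall n, k <= n -> j <= z n) -> pr j (ren_tm xi z a) (ren_tm xi z b)) /\
  (forall k (l l' : list tm), prL k l l' -> forall j xi z, (forall n, k <= n -> j <= z n) -> prL j (map (ren_tm xi z) l) (map (ren_tm xi z) l')).
Proof.
  apply pr_mut; intros; simpl; try solve [constructor; eauto].
  - constructor. apply H. intros [|n] Hn; simpl; [lia|]. specialize (H0 n). lia.
  - econstructor; eauto. eapply stab_ren; eauto.
  - apply p_blame. change (tBlame l) with (ren_tm xi z (tBlame l)). eapply stab_ren; eauto.
  - constructor. apply H. intros [|n] Hn; simpl; [lia|]. specialize (H0 n). lia.
  - constructor; eauto using value_ren.
Qed.

Definition pr_ren_ty := proj1 pr_ren.
Definition pr_ren_tm := proj1 (proj2 pr_ren).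

Definition subcond (k j : nat) (t t' : nat -> ty) :=
  forall n, k <= n -> exists m, j <= m /\ t n = TVar m /\ t' n = TVar m.

Lemma up_tm_tm_pr j (s s' : nat -> tm) : (forall n, pr j (s n) (s' n)) -> forall n, pr j (up_tm_tm s n) (up_tm_tm s' n).
Proof. intros H [|n]; simpl. constructor. apply pr_ren_tm with j; auto. Qed.
Lemma up_tm_ty_pr j (t t' : nat -> ty) : (forall n, prT j (t n) (t' n)) -> forall n, prT j (up_tm_ty t n) (up_tm_ty t' n).
Proof. intros H n; unfold up_tm_ty. apply pr_ren_ty with j; auto. Qed.
Lemma up_ty_tm_pr j (s s' : nat -> tm) : (forall n, pr j (s n) (s' n)) -> forall n, pr (S j) (up_ty_tm s n) (up_ty_tm s' n).
Proof. intros H n; unfold up_ty_tm. apply pr_ren_tm with j; auto. intros; lia. Qed.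
Lemma up_ty_ty_pr j (t t' : nat -> ty) : (forall n, prT j (t n) (t' n)) -> forall n, prT (S j) (up_ty_ty t n) (up_ty_ty t' n).
Proof. intros H [|n]; simpl. constructor. apply pr_ren_ty with j; auto. intros; lia. Qed.
Lemma subcond_tm k j t t' : subcond k j t t' -> subcond k j (up_tm_ty t) (up_tm_ty t').
Proof. intros H n Hn. destruct (H n Hn) as (m & Hm & E1 & E2). exists m; unfold up_tm_ty; rewrite E1, E2; auto. Qed.
Lemma subcond_ty k j t t' : subcond k j t t' -> subcond (S k) (S j) (up_ty_ty t) (up_ty_ty t').
Proof.
  intros H [|n] Hn; [lia|]. destruct (H n ltac:(lia)) as (m & Hm & E1 & E2).
  exists (S m); simpl; rewrite E1, E2; simpl; split; [lia|auto].
Qed.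

Lemma pr_subst :
  (forall k (T T' : ty), prT k T T' -> forall j s s' t t', (forall n, pr j (s n) (s' n)) ->
     (forall n, prT j (t n) (t' n)) -> subcond k j t t' -> prT j (subst_ty s t T) (subst_ty s' t' T')) /\
  (forall k (a b : tm), pr k a b -> forall j s s' t t', (forall n, pr j (s n) (s' n)) ->
     (forall n, prT j (t n) (t' n)) -> subcond k j t t' -> pr j (subst_tm s t a) (subst_tm s' t' b)) /\
  (forall k (l l' : list tm), prL k l l' -> forall j s s' t t', (forall n, pr j (s n) (s' n)) ->
     (forall n, prT j (t n) (t' n)) -> subcond k j t t' -> prL j (map (subst_tm s t) l) (map (subst_tm s' t') l')).
Proof.
  apply pr_mut; intros; simpl; auto;
  try solve [constructor; eauto 7 using up_tm_tm_pr, up_tm_ty_pr, up_ty_tm_pr, up_ty_ty_pr, subcond_tm, subcond_ty, value_subst].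
  - econstructor; eauto. eapply stab_subst; eauto.
    intros n Hn; destruct (H2 n Hn) as (m & ? & ? & ?); eauto.
  - apply p_blame. change (tBlame l) with (subst_tm s' t' (tBlame l)). eapply stab_subst; eauto.
    intros n Hn; destruct (H1 n Hn) as (m & ? & ? & ?); eauto.
Qed.
Definition pr_subst_ty := proj1 pr_subst.
Definition pr_subst_tm := proj1 (proj2 pr_subst).

Definition topc (a b : tm) : Prop :=
  match a, b with
  | tConst c, tConst c' => c = c'
  | tVar n, tVar n' => n = n'
  | tOp o l, tOp o' l' => o = o' /\ prL 0 l l'
  | tAbs T e, tAbs T' e' => prT 0 T T' /\ pr 0 e e'
  | tTAbs e, tTAbs e' => pr 1 e e'
  | tCast T1 T2 l, tCast T1' T2' l' => prT 0 T1 T1' /\ prT 0 T2 T2' /\ l = l'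
  | tApp a1 a2, tApp b1 b2 => pr 0 a1 b1 /\ pr 0 a2 b2
  | tTApp a T, tTApp a' T' => pr 0 a a' /\ prT 0 T T'
  | tWait T p e l, tWait T' p' e' l' => prT 0 T T' /\ pr 0 p p' /\ pr 0 e e' /\ l = l'
  | tActive T p e v l, tActive T' p' e' v' l' =>
      prT 0 T T' /\ pr 0 p p' /\ pr 0 e e' /\ pr 0 v v' /\ is_value v /\ l = l'
  | tBlame l, tBlame l' => l = l'
  | _, _ => False
  end.

Lemma topc_pr (a b : tm) : topc a b -> pr 0 a b.
Proof.
  destruct a, b; simpl; intros; try contradiction; intuition; subst.
  all: first [apply p_blame; intros s t _; constructor | constructor; auto].
Qed.

Lemma pr_st0 (a a' b : tm) : st a a' -> pr 0 a' b -> pr 0 a b.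
Proof. intros; econstructor; eauto using st_stab0. Qed.
Lemma pr_sts0 (a a' b : tm) : sts a a' -> pr 0 a' b -> pr 0 a b.
Proof. induction 1; eauto using pr_st0. Qed.
Lemma pr_blame0 (b : tm) l : sts b (tBlame l) -> pr 0 (tBlame l) b.
Proof. intros; constructor; auto using sts_stab0. Qed.

Lemma pr_ind_r (b : tm) (Q : tm -> Prop) :
  (forall a a', st a a' -> Q a' -> Q a) ->
  (forall l, sts b (tBlame l) -> Q (tBlame l)) ->
  (forall a, topc a b -> Q a) ->
  forall a, pr 0 a b -> Q a.
Proof.
  intros H1 H2 H3 a H.
  assert (G : forall k a b', pr k a b' -> k = 0 -> b' = b -> Q a).
  { clear a H. intros k a b' H; induction H; intros Hk Hb; subst;
    try solve [apply H3; simpl; repeat split; auto].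
    - eapply H1; [eapply stab_id; eauto | auto].
    - apply H2. eapply stab_id; eauto. }
  eapply G; eauto.
Qed.

Lemma pr_cases (a b : tm) : pr 0 a b ->
  (exists c, st a c /\ pr 0 c b) \/ (exists l, a = tBlame l /\ sts b (tBlame l)) \/ topc a b.
Proof.
  intros H.
  assert (G : forall k a b, pr k a b -> k = 0 ->
    (exists c, st a c /\ pr 0 c b) \/ (exists l, a = tBlame l /\ sts b (tBlame l)) \/ topc a b).
  { clear. intros k a b H; destruct H; intros Hk; subst; simpl;
    try solve [right; right; repeat split; auto].
    - left. exists a'; split; auto. eapply stab_id; eauto.
    - right; left. exists l; split; auto. eapply stab_id; eauto. }
  eauto.
Qed.

Lemma topc_val_l (a b : tm) : topc a b -> is_value a -> is_value b.
Proof. destruct a, b; simpl; tauto. Qed.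
Lemma topc_val_r (a b : tm) : topc a b -> is_value b -> is_value a.
Proof. destruct a, b; simpl; tauto. Qed.

Lemma pr_val_l (a b : tm) : pr 0 a b -> is_value a -> topc a b.
Proof.
  intros H Hv; destruct (pr_cases H) as [(c & Hs & _) | [(l & -> & _) | Ht]]; auto.
  - exfalso; eapply st_nval; eauto.
  - simpl in Hv; tauto.
Qed.
Lemma pr_val_l' (a b : tm) : pr 0 a b -> is_value a -> is_value b.
Proof. intros; eapply topc_val_l; eauto using pr_val_l. Qed.

Lemma pr_blame_l (b : tm) l : pr 0 (tBlame l) b -> sts b (tBlame l).
Proof.
  intros H; destruct (pr_cases H) as [(c & Hs & _) | [(l' & E & Hs) | Ht]].
  - exfalso; eapply st_nblame; eauto.
  - inversion E; subst; auto.
  - destruct b; simpl in Ht; try contradiction; subst; constructor.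
Qed.

Lemma lift_rst F (a a' : tm) : fok F -> sts a a' -> (forall l, a' <> tBlame l) -> sts (fplug F a) (fplug F a').
Proof.
  intros HF; induction 1; intros Hn; [constructor|].
  destruct (st_inv H) as [R | (F0 & a0 & l & HF0 & Hb & E1 & E2)].
  - econstructor; [apply st_r; apply rs_fr; eauto | auto].
  - subst. apply sts_normal in H0; [|apply blame_normal]. subst. exfalso; eapply Hn; eauto.
Qed.

Lemma lift_blame F (a : tm) l : fok F -> sts a (tBlame l) -> sts (fplug F a) (tBlame l).
Proof.
  intros HF H; remember (tBlame l) as bl; induction H; subst.
  - apply sts_one. apply st_b; auto. constructor.
  - destruct (st_inv H) as [R | (F0 & a0 & l' & HF0 & Hb & E1 & E2)].
    + econstructor; [apply st_r; apply rs_fr; eauto | auto].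
    + subst. apply sts_normal in H0; [|apply blame_normal]. inversion H0; subst.
      apply sts_one. apply st_b; auto. apply bl_fr; auto.
Qed.

Lemma lift_val F (a v : tm) : fok F -> sts a v -> is_value v -> sts (fplug F a) (fplug F v).
Proof. intros; apply lift_rst; auto. intros l ->; simpl in *; auto. Qed.

Definition prF (F F' : frame) : Prop :=
  match F, F' with
  | FOp o vs es, FOp o' vs' es' => o = o' /\ prL 0 vs vs' /\ prL 0 es es'
  | FAppL e, FAppL e' => pr 0 e e'
  | FAppR v, FAppR v' => pr 0 v v'
  | FTApp T, FTApp T' => prT 0 T T'
  | FWait T p l, FWait T' p' l' => prT 0 T T' /\ pr 0 p p' /\ l = l'
  | FActive T p v l, FActive T' p' v' l' => prT 0 T T' /\ pr 0 p p' /\ pr 0 v v' /\ is_value v /\ l = l'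
  | _, _ => False
  end.

Lemma prL_app k (l1 l1' l2 l2' : list tm) : prL k l1 l1' -> prL k l2 l2' -> prL k (l1 ++ l2) (l1' ++ l2').
Proof. induction 1; simpl; intros; auto. constructor; auto. Qed.

Lemma prL_app_inv_l k (vs es L : list tm) a : prL k (vs ++ a :: es) L ->
  exists vs' b es', L = vs' ++ b :: es' /\ prL k vs vs' /\ pr k a b /\ prL k es es'.
Proof.
  revert L; induction vs; simpl; intros L H; inversion H; subst.
  - exists nil, a', l'; simpl; repeat split; auto. constructor.
  - destruct (IHvs _ H5) as (vs' & b & es' & -> & ? & ? & ?).
    exists (a' :: vs'), b, es'; simpl; repeat split; auto. constructor; auto.
Qed.

Lemma prL_app_inv_r k (vs es L : list tm) b : prL k L (vs ++ b :: es) ->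
  exists vs' a es', L = vs' ++ a :: es' /\ prL k vs' vs /\ pr k a b /\ prL k es' es.
Proof.
  revert L; induction vs; simpl; intros L H; inversion H; subst.
  - exists nil, a, l; simpl; repeat split; auto. constructor.
  - destruct (IHvs _ H5) as (vs' & b' & es' & -> & ? & ? & ?).
    exists (a0 :: vs'), b', es'; simpl; repeat split; auto. constructor; auto.
Qed.

Lemma topc_fplug_l F (a b : tm) : topc (fplug F a) b -> exists F' b0, b = fplug F' b0 /\ prF F F' /\ pr 0 a b0.
Proof.
  destruct F; simpl; intros H; destruct b; simpl in H; try contradiction.
  - destruct H as [<- H]. apply prL_app_inv_l in H; destruct H as (vs' & b & es' & -> & ? & ? & ?).
    exists (FOp o vs' es'), b; simpl; repeat split; auto.
  - destruct H; exists (FAppL b2), b1; simpl; repeat split; auto.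
  - destruct H; exists (FAppR b1), b2; simpl; repeat split; auto.
  - destruct H; exists (FTApp t0), b; simpl; repeat split; auto.
  - destruct H as (? & ? & ? & <-); exists (FWait t1 b1 l), b2; simpl; repeat split; auto.
  - destruct H as (? & ? & ? & ? & ? & <-); exists (FActive t2 b1 b3 l), b2; simpl; repeat split; auto.
Qed.

Lemma topc_fplug_r F (a b : tm) : topc a (fplug F b) -> exists F' a0, a = fplug F' a0 /\ prF F' F /\ pr 0 a0 b.
Proof.
  destruct F; simpl; intros H; destruct a; simpl in H; try contradiction.
  - destruct H as [-> H]. apply prL_app_inv_r in H; destruct H as (vs' & a & es' & -> & ? & ? & ?).
    exists (FOp o vs' es'), a; simpl; repeat split; auto.
  - destruct H; exists (FAppL a2), a1; simpl; repeat split; auto.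
  - destruct H; exists (FAppR a1), a2; simpl; repeat split; auto.
  - destruct H; exists (FTApp t0), a; simpl; repeat split; auto.
  - destruct H as (? & ? & ? & ->); exists (FWait t1 a1 l), a2; simpl; repeat split; auto.
  - destruct H as (? & ? & ? & ? & ? & ->); exists (FActive t2 a1 a3 l), a2; simpl; repeat split; auto.
Qed.

Lemma prF_fplug F F' (a b : tm) : prF F F' -> pr 0 a b -> pr 0 (fplug F a) (fplug F' b).
Proof.
  intros H1 H2; apply topc_pr; destruct F, F'; simpl in *; try contradiction; intuition.
  apply prL_app; auto. constructor; auto.
Qed.

Lemma prL_vals k (l l' : list tm) : prL k l l' -> k = 0 -> Forall (@is_value Sg) l -> Forall (@is_value Sg) l'.
Proof. induction 1; intros -> Hf; inversion Hf; subst; constructor; eauto using pr_val_l'. Qed.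

Lemma prF_fok F F' : prF F F' -> fok F -> fok F'.
Proof.
  destruct F, F'; simpl; intros; try contradiction; intuition; eauto using pr_val_l', prL_vals.
Qed.

Lemma pr_val_r (a b : tm) : pr 0 a b -> is_value b -> exists a0, sts a a0 /\ is_value a0 /\ topc a0 b.
Proof.
  intros H Hv. revert a H. apply pr_ind_r.
  - intros a a' Hs (a0 & ? & ? & ?). exists a0; split; auto. econstructor; eauto.
  - intros l Hs. apply sts_normal in Hs; [|apply value_normal; auto]. subst; simpl in Hv; tauto.
  - intros a Ht. exists a; repeat split; auto. constructor. eapply topc_val_r; eauto.
Qed.

Lemma prL_eval (l ws : list tm) : prL 0 l ws -> Forall (@is_value Sg) ws ->
  exists vs0, Forall (@is_value Sg) vs0 /\ prL 0 vs0 ws /\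
    forall o pre post, Forall (@is_value Sg) pre -> sts (tOp o (pre ++ l ++ post)) (tOp o (pre ++ vs0 ++ post)).
Proof.
  intros H; remember 0 as k; induction H; intros Hw; subst.
  - exists nil; repeat split; auto. constructor. intros; constructor.
  - inversion Hw as [|? ? Hva' Hw']; subst. destruct IHprL as (vs0 & Hv & Hp & Hs); auto.
    destruct (pr_val_r H Hva') as (a0 & Ha & Hva & Hta).
    exists (a0 :: vs0); repeat split.
    + constructor; auto.
    + constructor; auto using topc_pr.
    + intros o pre post Hpre. eapply sts_trans.
      * apply (lift_val (FOp o pre (l ++ post))); simpl; eauto.
      * simpl. specialize (Hs o (pre ++ [a0]) post).
        rewrite <- !app_assoc in Hs. apply Hs. apply Forall_app; auto.
Qed.

Lemma prF_fok_back F' F : prF F' F -> fok F ->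
  exists F0, (forall x, sts (fplug F' x) (fplug F0 x)) /\ prF F0 F /\ fok F0.
Proof.
  destruct F', F; simpl; intros H Hok; try contradiction.
  - destruct H as (<- & H1 & H2). destruct (prL_eval H1 Hok) as (vs0 & Hv & Hp & Hs).
    exists (FOp o vs0 l0); simpl; repeat split; auto.
    intros x. specialize (Hs o nil (x :: l0) (Forall_nil _)). simpl in Hs. auto.
  - exists (FAppL t); simpl; repeat split; auto. intros; constructor.
  - destruct (pr_val_r H Hok) as (a0 & Ha & Hva & Hta).
    exists (FAppR a0); simpl; repeat split; auto using topc_pr.
    intros x. apply (lift_val (FAppL x)); simpl; auto.
  - exists (FTApp t); simpl; repeat split; auto. intros; constructor.
  - exists (FWait t t0 l); simpl; repeat split; auto; try tauto. intros; constructor.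
  - exists (FActive t t0 t1 l); simpl; repeat split; auto; try tauto. intros; constructor.
Qed.

Lemma blm_sts (a : tm) l : blm a l -> sts a (tBlame l).
Proof.
  destruct 1. constructor. apply sts_one; apply st_b; auto.
Qed.

Lemma BLb (b : tm) l : blm b l -> forall a, pr 0 a b -> sts a (tBlame l).
Proof.
  induction 1; intros a0 Hpa; revert a0 Hpa; apply pr_ind_r.
  - intros; econstructor; eauto.
  - intros l' Hs. apply sts_normal in Hs; [|apply blame_normal]. inversion Hs; subst; constructor.
  - intros a Ht; destruct a; simpl in Ht; try contradiction; subst; constructor.
  - intros; econstructor; eauto.
  - intros l' Hs. assert (Hs2 : sts (fplug F a) (tBlame l)) by (apply sts_one; apply st_b; auto).
    apply sts_det_normal with (1 := Hs2) in Hs; [|apply blame_normal].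
    apply sts_normal in Hs; [|apply blame_normal]. inversion Hs; subst; constructor.
  - intros a0 Ht. destruct (topc_fplug_r _ _ _ Ht) as (F' & a1 & -> & HF & Hp).
    destruct (prF_fok_back _ _ HF H) as (F0 & Hs & HF0 & Hok0).
    eapply sts_trans; [apply Hs|]. apply lift_blame; auto.
Qed.

Lemma BLf (a : tm) l : blm a l -> forall b, pr 0 a b -> sts b (tBlame l).
Proof.
  induction 1; intros b H1.
  - apply pr_blame_l; auto.
  - destruct (pr_cases H1) as [(c & Hs & Hp) | [(l' & E & _) | Ht]].
    + assert (c = tBlame l) by (eapply st_det; eauto; apply st_b; auto). subst.
      apply pr_blame_l; auto.
    + exfalso; eapply fplug_nblame; eauto.
    + destruct (topc_fplug_l _ _ _ Ht) as (F' & b0 & -> & HF & Hp).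
      apply lift_blame; eauto using prF_fok.
Qed.

Definition cfres (T11 T12 T21 T22 : ty) l (v : tm) : tm :=
  tAbs T21
    (let_in (sh_ty T11)
       (tApp (tCast (sh_ty T21) (sh_ty T11) l) (tVar 0))
       (tApp (tCast (ren_ty (upren S) (fun a => a) T12) (ren_ty S (fun a => a) T22) l)
             (tApp (sh_tm (sh_tm v)) (tVar 0)))).
Definition cares (T1 T2 : ty) l (v : tm) : tm :=
  tTAbs (tApp (tCast T1 T2 l) (tTApp (ren_tm (fun x => x) S v) (TVar 0))).

Lemma pr_cfres T11 T12 T21 T22 T11' T12' T21' T22' l (v w : tm) :
  prT 0 T11 T11' -> prT 0 T12 T12' -> prT 0 T21 T21' -> prT 0 T22 T22' -> pr 0 v w ->
  pr 0 (cfres T11 T12 T21 T22 l v) (cfres T11' T12' T21' T22' l w).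
Proof.
  intros. unfold cfres, let_in, sh_ty, sh_tm.
  repeat (apply p_abs || apply p_app || apply p_cast || apply p_var);
  first [apply pr_ren_ty with 0 | apply pr_ren_tm with 0 | idtac]; auto.
  apply pr_ren_tm with 0; auto.
Qed.

Lemma pr_cares T1 T2 T1' T2' l (v w : tm) :
  prT 1 T1 T1' -> prT 1 T2 T2' -> pr 0 v w -> pr 0 (cares T1 T2 l v) (cares T1' T2' l w).
Proof.
  intros. unfold cares. apply p_tabs. apply p_app. apply p_cast; auto.
  apply p_tapp. apply pr_ren_tm with 0; auto. intros; lia. apply pT_var.
Qed.

Lemma pr_open (e e' v w : tm) : pr 0 e e' -> pr 0 v w -> pr 0 (open_tm v e) (open_tm w e').
Proof.
  intros. unfold open_tm. apply pr_subst_tm with 0; auto.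
  - intros [|n]; simpl; auto. apply p_var.
  - intros; apply pT_var.
  - intros n _. exists n; repeat split; auto; lia.
Qed.

Lemma pr_open_ty (e e' : tm) T T' : pr 1 e e' -> prT 0 T T' -> pr 0 (open_ty T e) (open_ty T' e').
Proof.
  intros. unfold open_ty. apply pr_subst_tm with 1; auto.
  - intros; apply p_var.
  - intros [|n]; simpl; auto. apply pT_var.
  - intros [|n] Hn; [lia|]. exists n; repeat split; auto; lia.
Qed.

Lemma prT_refine k (T T' : ty) : prT k T T' -> (is_refinement T <-> is_refinement T').
Proof. destruct 1; simpl; tauto. Qed.

Lemma prL_consts_l (ks : list (const Sg)) L : prL 0 (map tConst ks) L -> L = map tConst ks.
Proof.
  revert L; induction ks; simpl; intros L H; inversion H as [|? ? ? ? ? Hp Hl]; subst; auto.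
  apply pr_val_l in Hp; [|simpl; auto]. destruct a'; simpl in Hp; try contradiction; subst.
  f_equal; auto.
Qed.

Lemma prL_consts_r (ks : list (const Sg)) L : prL 0 L (map tConst ks) -> Forall (@is_value Sg) L -> L = map tConst ks.
Proof.
  revert L; induction ks; simpl; intros L H Hv; inversion H as [|? ? ? ? ? Hp Hl]; subst; auto.
  inversion Hv as [|? ? Hv1 Hv2]; subst.
  apply pr_val_l in Hp; auto. destruct a0; simpl in Hp; try contradiction; subst.
  f_equal; auto.
Qed.

Ltac topc_inv H :=
  match type of H with
  | pr 0 ?v ?X => apply pr_val_l in H; [|simpl; auto]; topc_inv H
  | topc _ ?X => destruct X; simpl in H; try contradiction
  end.

Lemma red_fwd (a a1 b : tm) : red a a1 -> topc a b -> exists b1, st b b1 /\ pr 0 a1 b1.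
Proof.
  intros Hr Ht; destruct Hr; destruct b; simpl in Ht; try contradiction.
  - destruct Ht as [<- Hl]. apply prL_consts_l in Hl; subst.
    eexists; split; [apply st_r, rs_red, red_op; eauto | apply topc_pr; simpl; auto].
  - destruct Ht as [H1 H2]. assert (Hv := pr_val_l' H2 H). topc_inv H1. destruct H1.
    eexists; split; [apply st_r, rs_red, red_beta; auto | apply pr_open; auto].
  - destruct Ht as [H1 H2]. topc_inv H1.
    eexists; split; [apply st_r, rs_red, red_tbeta | apply pr_open_ty; auto].
  - destruct Ht as [H1 H2]. assert (Hv := pr_val_l' H2 H). topc_inv H1. destruct H1 as (Ha & Hb & <-).
    inversion Ha; inversion Hb; subst.
    eexists; split; [apply st_r, rs_red, red_cast_base; auto | auto].
  - destruct Ht as [H1 H2]. assert (Hv := pr_val_l' H2 H). topc_inv H1. destruct H1 as (Ha & Hb & <-).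
    inversion Ha; inversion Hb; subst.
    eexists; split; [apply st_r, rs_red, red_cast_fun; auto | ].
    apply pr_cfres; auto.
  - destruct Ht as [H1 H2]. assert (Hv := pr_val_l' H2 H). topc_inv H1. destruct H1 as (Ha & Hb & <-).
    inversion Ha; inversion Hb; subst.
    eexists; split; [apply st_r, rs_red, red_cast_forall; auto | ].
    apply pr_cares; auto.
  - destruct Ht as [H1 H2]. assert (Hv := pr_val_l' H2 H). topc_inv H1. destruct H1 as (Ha & Hb & <-).
    inversion Ha; subst.
    eexists; split; [apply st_r, rs_red, red_cast_forget; auto | ].
    apply topc_pr; simpl; repeat split; auto. apply topc_pr; simpl; auto.
  - destruct Ht as [H1 H2]. assert (Hv := pr_val_l' H2 H). topc_inv H1. destruct H1 as (Ha & Hb & <-).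
    inversion Hb; subst.
    eexists; split; [apply st_r, rs_red, red_cast_precheck; auto | ].
    + rewrite <- (prT_refine Ha); auto.
    + apply topc_pr; simpl; repeat split; auto. apply topc_pr; simpl; repeat split; auto.
      apply topc_pr; simpl; repeat split; auto.
  - destruct Ht as (H1 & H2 & H3 & <-). assert (Hv := pr_val_l' H3 H).
    eexists; split; [apply st_r, rs_red, red_check; auto | ].
    apply topc_pr; simpl; repeat split; auto using pr_open.
  - destruct Ht as (H1 & H2 & H3 & H4 & H5 & <-). assert (Hv := pr_val_l' H4 H5).
    topc_inv H3. subst.
    eexists; split; [apply st_r, rs_red, red_ok; auto | auto].
  - destruct Ht as (H1 & H2 & H3 & H4 & H5 & <-). assert (Hv := pr_val_l' H4 H5).
    topc_inv H3. subst.
    eexists; split; [apply st_r, rs_red, red_fail; auto | apply topc_pr; simpl; auto].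
Qed.

Lemma eval_app (A1 A2 V1 V2 : tm) : pr 0 A1 V1 -> pr 0 A2 V2 -> is_value V1 -> is_value V2 ->
  exists A1v A2v, sts (tApp A1 A2) (tApp A1v A2v) /\ is_value A1v /\ is_value A2v /\ topc A1v V1 /\ pr 0 A2v V2.
Proof.
  intros H1 H2 Hv1 Hv2.
  destruct (pr_val_r H1 Hv1) as (A1v & Hs1 & Ha1 & Ht1).
  destruct (pr_val_r H2 Hv2) as (A2v & Hs2 & Ha2 & Ht2).
  exists A1v, A2v; repeat split; auto using topc_pr.
  eapply sts_trans.
  - apply (lift_val (FAppL A2) (v := A1v)); simpl; auto.
  - apply (lift_val (FAppR A1v) (v := A2v)); simpl; auto.
Qed.

Lemma prT_inv_r_base k (X : ty) B : prT k X (TBase B) -> X = TBase B.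
Proof. intros H; inversion H; auto. Qed.

Ltac stepred := eapply sts_trans; [eassumption | apply sts_one; apply st_r, rs_red].

Lemma red_bwd (b b1 a : tm) : red b b1 -> topc a b -> exists a1, sts a a1 /\ pr 0 a1 b1.
Proof.
  intros Hr Ht; destruct Hr; destruct a; simpl in Ht; try contradiction.
  - destruct Ht as [-> Hl].
    destruct (prL_eval Hl) as (vs0 & Hv & Hp & Hs).
    { clear. induction ks; simpl; constructor; simpl; auto. }
    apply prL_consts_r in Hp; auto; subst.
    specialize (Hs o nil nil (Forall_nil _)). rewrite !app_nil_r in Hs. simpl in Hs.
    eexists; split; [stepred; apply red_op; eauto | apply topc_pr; simpl; auto].
  - destruct Ht as [H1 H2].
    destruct (eval_app H1 H2) as (A1v & A2v & Hs & Hv1 & Hv2 & Ht1 & Hp2); simpl; auto.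
    destruct A1v; simpl in Ht1; try contradiction. destruct Ht1.
    eexists; split; [stepred; apply red_beta; auto | apply pr_open; auto].
  - destruct Ht as [H1 H2].
    destruct (pr_val_r H1) as (A0 & Hs & Hv & Ht); simpl; auto.
    destruct A0; simpl in Ht; try contradiction.
    eexists; split.
    + eapply sts_trans; [apply (lift_val (FTApp t)); simpl; eauto|]. apply sts_one, st_r, rs_red, red_tbeta.
    + apply pr_open_ty; auto.
  - destruct Ht as [H1 H2].
    destruct (eval_app H1 H2) as (A1v & A2v & Hs & Hv1 & Hv2 & Ht1 & Hp2); simpl; auto.
    destruct A1v; simpl in Ht1; try contradiction. destruct Ht1 as (Ha & Hb & ->).
    inversion Ha; inversion Hb; subst.
    eexists; split; [stepred; apply red_cast_base; auto | auto].
  - destruct Ht as [H1 H2].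
    destruct (eval_app H1 H2) as (A1v & A2v & Hs & Hv1 & Hv2 & Ht1 & Hp2); simpl; auto.
    destruct A1v; simpl in Ht1; try contradiction. destruct Ht1 as (Ha & Hb & ->).
    inversion Ha; inversion Hb; subst.
    eexists; split; [stepred; apply red_cast_fun; auto | apply pr_cfres; auto].
  - destruct Ht as [H1 H2].
    destruct (eval_app H1 H2) as (A1v & A2v & Hs & Hv1 & Hv2 & Ht1 & Hp2); simpl; auto.
    destruct A1v; simpl in Ht1; try contradiction. destruct Ht1 as (Ha & Hb & ->).
    inversion Ha; inversion Hb; subst.
    eexists; split; [stepred; apply red_cast_forall; auto | apply pr_cares; auto].
  - destruct Ht as [H1 H2].
    destruct (eval_app H1 H2) as (A1v & A2v & Hs & Hv1 & Hv2 & Ht1 & Hp2); simpl; auto.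
    destruct A1v; simpl in Ht1; try contradiction. destruct Ht1 as (Ha & Hb & ->).
    inversion Ha; subst.
    eexists; split; [stepred; apply red_cast_forget; auto | ].
    apply topc_pr; simpl; repeat split; auto. apply topc_pr; simpl; auto.
  - destruct Ht as [H1 H2].
    destruct (eval_app H1 H2) as (A1v & A2v & Hs & Hv1 & Hv2 & Ht1 & Hp2); simpl; auto.
    destruct A1v; simpl in Ht1; try contradiction. destruct Ht1 as (Ha & Hb & ->).
    inversion Hb; subst.
    eexists; split; [stepred; apply red_cast_precheck; auto | ].
    + rewrite (prT_refine Ha); auto.
    + apply topc_pr; simpl; repeat split; auto. apply topc_pr; simpl; repeat split; auto.
      apply topc_pr; simpl; repeat split; auto.
  - destruct Ht as (H1 & H2 & H3 & ->).
    destruct (pr_val_r H3 H) as (A0 & Hs & Hv & Ht).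
    eexists; split.
    + eapply sts_trans; [apply (lift_val (FWait t a1 l) (v := A0)); simpl; eauto|].
      apply sts_one, st_r, rs_red, red_check; auto.
    + apply topc_pr; simpl; repeat split; auto using pr_open, topc_pr.
  - destruct Ht as (H1 & H2 & H3 & H4 & H5 & ->).
    destruct (pr_val_r H3) as (A0 & Hs & Hv & Ht); simpl; auto.
    destruct A0; simpl in Ht; try contradiction; subst.
    eexists; split; [|eauto].
    eapply sts_trans; [apply (lift_val (FActive t a1 a3 l) (v := tConst (ctrue Sg))); simpl; eauto|].
    apply sts_one, st_r, rs_red, red_ok; auto.
  - destruct Ht as (H1 & H2 & H3 & H4 & H5 & ->).
    destruct (pr_val_r H3) as (A0 & Hs & Hv & Ht); simpl; auto.
    destruct A0; simpl in Ht; try contradiction; subst.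
    exists (tBlame l); split; [|apply topc_pr; simpl; reflexivity].
    eapply sts_trans; [apply (lift_val (FActive t a1 a3 l) (v := tConst (cfalse Sg))); simpl; eauto|].
    apply sts_one, st_r, rs_red, red_fail; auto.
Qed.

Lemma classic_blame (b : tm) : (exists l, b = tBlame l) \/ (forall l, b <> tBlame l).
Proof. destruct b; try (right; intros; discriminate). left; eauto. Qed.

Lemma FS_rst (a a1 : tm) : rst a a1 -> forall b, pr 0 a b -> exists b1, sts b b1 /\ pr 0 a1 b1.
Proof.
  induction 1; intros b' Hp.
  - destruct (pr_cases Hp) as [(c & Hs & Hc) | [(l & -> & _) | Ht]].
    + assert (c = b) by (eapply st_det; eauto; apply st_r, rs_red; auto). subst.
      exists b'; split; auto. constructor.
    + inversion H.
    + edestruct red_fwd as (b1 & Hs & Hp1); [exact H | exact Ht |]. exists b1; split; auto. apply sts_one; auto.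
  - destruct (pr_cases Hp) as [(c & Hs & Hc) | [(l & E & _) | Ht]].
    + assert (c = fplug F b) by (eapply st_det; eauto; apply st_r, rs_fr; auto). subst.
      exists b'; split; auto. constructor.
    + exfalso; eapply fplug_nblame; eauto.
    + destruct (topc_fplug_l _ _ _ Ht) as (F' & b0 & -> & HF & Hp0).
      destruct (IHrst _ Hp0) as (b0' & Hs & Hp').
      assert (HF' := prF_fok _ _ HF H).
      destruct (classic_blame b0') as [(l & ->) | Hnb].
      * exists (tBlame l); split; [apply lift_blame; auto|].
        apply pr_sts0 with (tBlame l); [|apply pr_blame0; constructor].
        apply lift_blame; auto. eapply BLb; [apply bl_here | exact Hp'].
      * exists (fplug F' b0'); split; [apply lift_rst; auto|].
        apply prF_fplug; auto.
Qed.

Lemma FS (a a1 b : tm) : st a a1 -> pr 0 a b -> exists b1, sts b b1 /\ pr 0 a1 b1.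
Proof.
  destruct 1; intros Hp.
  - eapply FS_rst; eauto.
  - exists (tBlame l); split.
    + eapply BLf; [apply bl_fr; eauto | exact Hp].
    + apply topc_pr; simpl; auto.
Qed.

Lemma BS_rst (b b1 : tm) : rst b b1 -> forall a, pr 0 a b -> exists a1, sts a a1 /\ pr 0 a1 b1.
Proof.
  assert (Gen : forall b b1, st b b1 -> forall l, sts b (tBlame l) -> exists a1, sts (tBlame l) a1 /\ pr 0 a1 b1).
  { intros b0 b2 Hs l Hb. exists (tBlame l); split; [constructor|].
    apply pr_blame0. eapply sts_det_normal; eauto using blame_normal. apply sts_one; auto. }
  induction 1; intros a0 Hpa; revert a0 Hpa; apply pr_ind_r.
  - intros x x' Hs (a1 & ? & ?); exists a1; split; auto; econstructor; eauto.
  - intros l Hs; eapply Gen; eauto. apply st_r, rs_red; auto.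
  - intros x Ht. edestruct red_bwd as (a1 & ? & ?); [exact H | exact Ht |]; eauto.
  - intros x x' Hs (a1 & ? & ?); exists a1; split; auto; econstructor; eauto.
  - intros l Hs; eapply Gen; eauto. apply st_r, rs_fr; auto.
  - intros x Ht. destruct (topc_fplug_r _ _ _ Ht) as (F' & a0 & -> & HF & Hp0).
    destruct (prF_fok_back _ _ HF H) as (F0 & Hs0 & HF0 & Hok0).
    destruct (IHrst _ Hp0) as (a0' & Hs & Hp').
    destruct (classic_blame a0') as [(l & ->) | Hnb].
    + exists (tBlame l); split.
      * eapply sts_trans; [apply Hs0|]. apply lift_blame; auto.
      * apply pr_blame0. apply lift_blame; auto. apply pr_blame_l; auto.
    + exists (fplug F0 a0'); split.
      * eapply sts_trans; [apply Hs0|]. apply lift_rst; auto.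
      * apply prF_fplug; auto.
Qed.

Lemma BS (b b1 a : tm) : st b b1 -> pr 0 a b -> exists a1, sts a a1 /\ pr 0 a1 b1.
Proof.
  destruct 1; intros Hp.
  - eapply BS_rst; eauto.
  - exists (tBlame l); split.
    + eapply BLb; [apply bl_fr; eauto | exact Hp].
    + apply topc_pr; simpl; auto.
Qed.

Lemma FW (a v : tm) : sts a v -> is_value v -> forall b, pr 0 a b -> exists w, sts b w /\ is_value w /\ pr 0 v w.
Proof.
  induction 1; intros Hv b0 Hp.
  - exists b0; repeat split; auto. constructor. eapply pr_val_l'; eauto.
  - destruct (FS H Hp) as (b1 & Hs1 & Hp1).
    destruct (IHsts Hv _ Hp1) as (w & ? & ? & ?). exists w; repeat split; auto. eapply sts_trans; eauto.
Qed.

Lemma BW (b w : tm) : sts b w -> is_value w -> forall a, pr 0 a b -> exists v, sts a v /\ is_value v /\ pr 0 v w.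
Proof.
  induction 1; intros Hv a0 Hp.
  - destruct (pr_val_r Hp Hv) as (a1 & ? & ? & ?). exists a1; repeat split; auto using topc_pr.
  - destruct (BS H Hp) as (a1 & Hs1 & Hp1).
    destruct (IHsts Hv _ Hp1) as (v & ? & ? & ?). exists v; repeat split; auto. eapply sts_trans; eauto.
Qed.

End FHP.

Theorem mainTheorem5 :
  forall (S : signature) (e e1 e2 : tm S) (x : nat),
    wf_tm e -> wf_tm e1 -> wf_tm e2 ->
    step e1 e2 ->
    (forall v1, is_value v1 -> steps (subst_var x e1 e) v1 ->
       exists v2, is_value v2 /\ steps (subst_var x e2 e) v2 /\
         (v1 = tConst (ctrue S) -> v2 = tConst (ctrue S)))
    /\
    (forall v2, is_value v2 -> steps (subst_var x e2 e) v2 ->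
       exists v1, is_value v1 /\ steps (subst_var x e1 e) v1 /\
         (v2 = tConst (ctrue S) -> v1 = tConst (ctrue S))).
Proof.
  intros S e e1 e2 x Hwf Hwf1 Hwf2 Hst.
  assert (Hp : pr 0 (subst_var x e1 e) (subst_var x e2 e)).
  { unfold subst_var. apply (pr_subst_tm (proj2 (pr_refl S) e Hwf 0)).
    - intros n. destruct (Nat.eqb n x).
      + eapply p_st; [apply st_stab0, step_st; eauto | apply (proj2 (pr_refl S)); auto].
      + apply p_var.
    - intros; apply pT_var.
    - intros n _; exists n; repeat split; auto; lia. }
  split.
  - intros v1 Hv1 Hs. apply steps_sts in Hs.
    destruct (FW Hs Hv1 Hp) as (w & Hw & Hvw & Hpw).
    exists w; repeat split; auto. apply steps_sts; auto.
    intros ->. apply pr_val_l in Hpw; [|simpl; auto]. destruct w; simpl in Hpw; try contradiction. subst; auto.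
  - intros v2 Hv2 Hs. apply steps_sts in Hs.
    destruct (BW Hs Hv2 Hp) as (v & Hv & Hvv & Hpv).
    exists v; repeat split; auto. apply steps_sts; auto.
    intros ->. apply pr_val_l in Hpv; auto. destruct v; simpl in Hpv; try contradiction. subst; auto.
Qed.
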